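(* Let $\mathcal{C}$ be a class of groups that contains a root class $\mathcal{R}$, and suppose that (1) $\mathcal{C}$ is closed under subgroups and finite direct products; (2) every $\mathcal{R}$-by-$\mathcal{C}$ group belongs to $\mathcal{C}$; (3) for every group in $\mathcal{C}$ there is a group in $\mathcal{R}$ of the same cardinality. Let $A$ be a residually $\mathcal{C}$ group and $H\leq A$ a finite subgroup. Then the special HNN extension $\langle A,t\mid t^{-1}ht=h\ \ \forall h\in H\rangle$ is residually $\mathcal{C}$.
   Context: A class of groups is a family of groups closed under isomorphism. A group $G$ is residually $\mathcal{C}$ if for every $g\in G\setminus\{e\}$ there exist $C\in\mathcal{C}$ and a surjective homomorphism $\varphi\colon G\to C$ with $\varphi(g)\neq e$. A root class is a non-trivial class $\mathcal{R}$ closed under subgroups and finite direct products satisfying the Gruenberg condition: for any chain $K\trianglelefteq H\trianglelefteq G$ with $G/H, H/K\in\mathcal{R}$ there is $L\trianglelefteq G$ with $L\subseteq K$ and $G/L\in\mathcal{R}$. A group is $\mathcal{A}$-by-$\mathcal{B}$ if it has a normal subgroup in $\mathcal{A}$ with quotient in $\mathcal{B}$. *)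

(* Defs.v *)
From Stdlib Require Import List ProofIrrelevance.

Set Implicit Arguments.

Record group := Group {
  carrier :> Type;
  gmul : carrier -> carrier -> carrier;
  gone : carrier;
  ginv : carrier -> carrier;
  gmulA : forall x y z, gmul x (gmul y z) = gmul (gmul x y) z;
  gmul1l : forall x, gmul gone x = x;
  gmul1r : forall x, gmul x gone = x;
  gmulVl : forall x, gmul (ginv x) x = gone;
  gmulVr : forall x, gmul x (ginv x) = gone }.

Arguments gmul {g}.
Arguments gone {g}.
Arguments ginv {g}.

Definition is_hom {G K : group} (f : G -> K) : Prop :=
  forall x y, f (gmul x y) = gmul (f x) (f y).

Definition injective {X Y : Type} (f : X -> Y) : Prop :=
  forall x y, f x = f y -> x = y.

Definition surjective {X Y : Type} (f : X -> Y) : Prop :=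
  forall y, exists x, f x = y.

Definition isomorphic (G K : group) : Prop :=
  exists f : G -> K, is_hom f /\ injective f /\ surjective f.

Definition same_card (G K : group) : Prop :=
  exists f : G -> K, injective f /\ surjective f.

Definition is_subgroup {G : group} (P : G -> Prop) : Prop :=
  P gone /\ (forall x y, P x -> P y -> P (gmul x y)) /\
  (forall x, P x -> P (ginv x)).

Definition is_normal {G : group} (N : G -> Prop) : Prop :=
  is_subgroup N /\ forall x g, N x -> N (gmul (ginv g) (gmul x g)).

Definition finite_subgroup {G : group} (P : G -> Prop) : Prop :=
  is_subgroup P /\ exists l : list G, forall x, P x -> In x l.

Section Sub.
Variables (G : group) (P : G -> Prop) (hP : is_subgroup P).

Definition sub_mul (x y : {x : G | P x}) : {x : G | P x} :=
  exist _ (gmul (proj1_sig x) (proj1_sig y))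
    (proj1 (proj2 hP) _ _ (proj2_sig x) (proj2_sig y)).
Definition sub_one : {x : G | P x} := exist _ gone (proj1 hP).
Definition sub_inv (x : {x : G | P x}) : {x : G | P x} :=
  exist _ (ginv (proj1_sig x)) (proj2 (proj2 hP) _ (proj2_sig x)).

Lemma sub_eq (x y : {x : G | P x}) : proj1_sig x = proj1_sig y -> x = y.
Proof.
  destruct x as [x px], y as [y py]; simpl; intros ->.
  f_equal; apply proof_irrelevance.
Qed.

Definition subgrp : group.
Proof.
  refine (@Group {x : G | P x} sub_mul sub_one sub_inv _ _ _ _ _);
  intros; apply sub_eq; simpl.
  - apply gmulA.
  - apply gmul1l.
  - apply gmul1r.
  - apply gmulVl.
  - apply gmulVr.
Defined.
End Sub.

Definition prodgrp (G K : group) : group.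
Proof.
  refine (@Group (G * K)%type
    (fun x y => (gmul (fst x) (fst y), gmul (snd x) (snd y)))
    (gone, gone) (fun x => (ginv (fst x), ginv (snd x))) _ _ _ _ _);
  intros; simpl;
  repeat match goal with p : (_ * _)%type |- _ => destruct p end; simpl;
  f_equal; auto using gmulA, gmul1l, gmul1r, gmulVl, gmulVr.
Defined.

Definition iso_closed (C : group -> Prop) : Prop :=
  forall G K, isomorphic G K -> C G -> C K.

Definition subgroup_closed (C : group -> Prop) : Prop :=
  forall (G : group) (P : G -> Prop) (hP : is_subgroup P), C G -> C (subgrp hP).

Definition product_closed (C : group -> Prop) : Prop :=
  forall G K, C G -> C K -> C (prodgrp G K).

(** "G/N belongs to C", for N a normal subgroup of G: there is a surjective
    homomorphism from G onto a group of C whose kernel is exactly N. *)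
Definition quotient_in (C : group -> Prop) (G : group) (N : G -> Prop) : Prop :=
  exists Q : group, C Q /\ exists f : G -> Q,
    is_hom f /\ surjective f /\ forall x, f x = gone <-> N x.

Definition gruenberg (R : group -> Prop) : Prop :=
  forall (G : group) (H K : G -> Prop) (hH : is_normal H),
    (forall x, K x -> H x) ->
    is_normal (G := subgrp (proj1 hH)) (fun x => K (proj1_sig x)) ->
    quotient_in R G H ->
    quotient_in R (subgrp (proj1 hH)) (fun x => K (proj1_sig x)) ->
    exists L : G -> Prop, is_normal L /\ (forall x, L x -> K x) /\ quotient_in R G L.

Definition nontrivial_class (R : group -> Prop) : Prop :=
  exists G : group, R G /\ exists x : G, x <> gone.

Definition root_class (R : group -> Prop) : Prop :=
  iso_closed R /\ nontrivial_class R /\ subgroup_closed R /\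
  product_closed R /\ gruenberg R.

Definition ext_by (A B : group -> Prop) (G : group) : Prop :=
  exists (N : G -> Prop) (hN : is_normal N),
    A (subgrp (proj1 hN)) /\ quotient_in B G N.

Definition residually (C : group -> Prop) (G : group) : Prop :=
  forall g : G, g <> gone -> exists Q : group, C Q /\
    exists f : G -> Q, is_hom f /\ surjective f /\ f g <> gone.

(** G (with i : A -> G and stable letter t) is the special HNN extension
    < A, t | t^-1 h t = h  (h in H) >, characterised by the universal property
    of the presentation. *)
Definition is_special_HNN (A : group) (H : A -> Prop) (G : group)
    (i : A -> G) (t : G) : Prop :=
  is_hom i /\
  (forall h, H h -> gmul (ginv t) (gmul (i h) t) = i h) /\
  (forall (K : group) (f : A -> K) (k : K), is_hom f ->
     (forall h, H h -> gmul (ginv k) (gmul (f h) k) = f h) ->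
     exists psi : G -> K, is_hom psi /\ (forall a, psi (i a) = f a) /\ psi t = k) /\
  (forall (K : group) (p1 p2 : G -> K), is_hom p1 -> is_hom p2 ->
     (forall a, p1 (i a) = p2 (i a)) -> p1 t = p2 t -> forall x, p1 x = p2 x).
Arguments is_special_HNN : clear implicits.

(* Main.v *)
Require Import Defs.
From Stdlib Require Import List Classical ClassicalEpsilon FunctionalExtensionality ProofIrrelevance PropExtensionality PeanoNat Lia Bool.
Import ListNotations.
Arguments gmulA {g} x y z.
Arguments gmul1l {g} x.
Arguments gmul1r {g} x.
Arguments gmulVl {g} x.
Arguments gmulVr {g} x.

Lemma g_cancel_l {G : group} (a x y : G) : gmul a x = gmul a y -> x = y.
Proof. intro E. rewrite <- (gmul1l x), <- (gmul1l y), <- (gmulVl a), <- !gmulA, E. reflexivity. Qed.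

Lemma g_cancel_r {G : group} (a x y : G) : gmul x a = gmul y a -> x = y.
Proof. intro E. rewrite <- (gmul1r x), <- (gmul1r y), <- (gmulVr a), !gmulA, E. reflexivity. Qed.

Lemma g_inv_uniq {G : group} (x y : G) : gmul x y = gone -> y = ginv x.
Proof. intro E. apply (g_cancel_l x). rewrite E, gmulVr. reflexivity. Qed.

Lemma g_inv_uniq_l {G : group} (x y : G) : gmul x y = gone -> x = ginv y.
Proof. intro E. apply (g_cancel_r y). rewrite E, gmulVl. reflexivity. Qed.

Lemma g_invK {G : group} (x : G) : ginv (ginv x) = x.
Proof. symmetry. apply g_inv_uniq. apply gmulVl. Qed.

Lemma g_inv1 {G : group} : ginv (gone : G) = gone.
Proof. symmetry. apply g_inv_uniq. apply gmul1l. Qed.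

Lemma g_invM {G : group} (x y : G) : ginv (gmul x y) = gmul (ginv y) (ginv x).
Proof. symmetry. apply g_inv_uniq.
  rewrite gmulA, <- (gmulA x y), gmulVr, gmul1r, gmulVr. reflexivity. Qed.

Lemma g_mulKl {G : group} (x y : G) : gmul (ginv x) (gmul x y) = y.
Proof. rewrite gmulA, gmulVl, gmul1l. reflexivity. Qed.
Lemma g_mulKr {G : group} (x y : G) : gmul x (gmul (ginv x) y) = y.
Proof. rewrite gmulA, gmulVr, gmul1l. reflexivity. Qed.
Lemma g_mulKl' {G : group} (x y : G) : gmul (gmul y x) (ginv x) = y.
Proof. rewrite <- gmulA, gmulVr, gmul1r. reflexivity. Qed.
Lemma g_mulKr' {G : group} (x y : G) : gmul (gmul y (ginv x)) x = y.
Proof. rewrite <- gmulA, gmulVl, gmul1r. reflexivity. Qed.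

Lemma g_eq1 {G : group} (x y : G) : gmul x (ginv y) = gone -> x = y.
Proof. intro E. apply g_inv_uniq_l in E. rewrite g_invK in E. exact E. Qed.

Lemma g_inv_eq1 {G : group} (x : G) : ginv x = gone -> x = gone.
Proof. intro E. rewrite <- (g_invK x), E, g_inv1. reflexivity. Qed.

Lemma hom_one {G K : group} (f : G -> K) : is_hom f -> f gone = gone.
Proof. intro hf. apply (g_cancel_l (f gone)). rewrite <- hf, !gmul1r. reflexivity. Qed.

Lemma hom_inv {G K : group} (f : G -> K) : is_hom f -> forall x, f (ginv x) = ginv (f x).
Proof. intros hf x. apply g_inv_uniq. rewrite <- hf, gmulVr. apply hom_one; auto. Qed.

Lemma hom_comp {G K L : group} (f : G -> K) (g : K -> L) :
  is_hom f -> is_hom g -> is_hom (fun x => g (f x)).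
Proof. intros hf hg x y. rewrite hf, hg. reflexivity. Qed.

Fixpoint gpow {G : group} (x : G) (n : nat) : G :=
  match n with 0 => gone | S n => gmul (gpow x n) x end.

Lemma gpow_add {G : group} (x : G) a b : gpow x (a + b) = gmul (gpow x a) (gpow x b).
Proof. induction b; simpl. rewrite Nat.add_0_r, gmul1r; auto.
  rewrite Nat.add_succ_r; simpl. rewrite IHb, gmulA. reflexivity. Qed.

Lemma gpow_mul {G : group} (x : G) a b : gpow x (a * b) = gpow (gpow x a) b.
Proof. induction b; simpl. rewrite Nat.mul_0_r; auto.
  rewrite Nat.mul_succ_r, gpow_add, IHb. reflexivity. Qed.

Lemma gpow_one {G : group} n : gpow (gone : G) n = gone.
Proof. induction n; simpl; auto. rewrite IHn, gmul1l. auto. Qed.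

Lemma gpow_comm {G : group} (x : G) n : gmul (gpow x n) x = gmul x (gpow x n).
Proof. induction n; simpl. rewrite gmul1l, gmul1r; auto.
  rewrite (gmulA x), <- IHn. reflexivity. Qed.

Lemma hom_pow {G K : group} (f : G -> K) : is_hom f -> forall x n, f (gpow x n) = gpow (f x) n.
Proof. intros hf x n; induction n; simpl. apply hom_one; auto. rewrite hf, IHn; auto. Qed.

Lemma gpow_inv {G : group} (x : G) n : gpow (ginv x) n = ginv (gpow x n).
Proof. induction n; simpl. rewrite g_inv1; auto.
  rewrite IHn, gpow_comm, g_invM. reflexivity. Qed.

Definition dec (P : Prop) : {P} + {~P} := excluded_middle_informative P.


Definition wr_mul (P Q : group) (a b : (Q -> P) * Q) : (Q -> P) * Q :=
  (fun x => gmul (fst a x) (fst b (gmul x (snd a))), gmul (snd a) (snd b)).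
Definition wr_inv (P Q : group) (a : (Q -> P) * Q) : (Q -> P) * Q :=
  (fun x => ginv (fst a (gmul x (ginv (snd a)))), ginv (snd a)).

Definition wr (P Q : group) : group.
Proof.
  refine (@Group ((Q -> P) * Q)%type (wr_mul P Q) (fun _ => gone, gone) (wr_inv P Q) _ _ _ _ _);
  intros; repeat match goal with p : (_ * _)%type |- _ => destruct p end;
  unfold wr_mul, wr_inv; simpl; f_equal; try apply functional_extensionality; intros;
  rewrite ?gmulA, ?gmul1l, ?gmul1r, ?gmulVl, ?gmulVr; auto.
  all: rewrite ?g_mulKl', ?g_mulKr'; rewrite ?gmulVl, ?gmulVr; reflexivity.
Defined.

Lemma wr_mul_eq (P Q : group) (a b : wr P Q) :
  gmul a b = ((fun x => gmul (fst a x) (fst b (gmul x (snd a)))), gmul (snd a) (snd b)).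
Proof. reflexivity. Qed.
Lemma wr_one_eq (P Q : group) : (gone : wr P Q) = (fun _ => gone, gone).
Proof. reflexivity. Qed.
Lemma wr_inv_eq (P Q : group) (a : wr P Q) :
  ginv a = (fun x => ginv (fst a (gmul x (ginv (snd a)))), ginv (snd a)).
Proof. reflexivity. Qed.

Definition isperm (X : Type) (p : (X -> X) * (X -> X)) : Prop :=
  (forall x, fst p (snd p x) = x) /\ (forall x, snd p (fst p x) = x).

Definition sym_mul (X : Type) (p q : {p | isperm X p}) : {p | isperm X p}.
Proof.
  destruct p as [[f f'] [H1 H2]], q as [[g g'] [K1 K2]].
  exists (fun x => f (g x), fun x => g' (f' x)). split; simpl; intro x.
  - rewrite K1; apply H1. - rewrite H2; apply K2.
Defined.
Definition sym_one (X : Type) : {p | isperm X p}.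
Proof. exists (fun x => x, fun x => x). split; reflexivity. Defined.
Definition sym_inv (X : Type) (p : {p | isperm X p}) : {p | isperm X p}.
Proof. destruct p as [[f f'] [H1 H2]]. exists (f', f). split; simpl; auto. Defined.

Lemma sym_ext (X : Type) (p q : {p | isperm X p}) :
  (forall x, fst (proj1_sig p) x = fst (proj1_sig q) x) -> p = q.
Proof.
  destruct p as [[f f'] [H1 H2]], q as [[g g'] [K1 K2]]; simpl in *; intro E.
  assert (f = g) by (apply functional_extensionality; auto). subst g.
  assert (f' = g'). { apply functional_extensionality; intro x.
    rewrite <- (K1 x) at 1. rewrite H2. reflexivity. } subst g'.
  f_equal. apply proof_irrelevance.
Qed.

Definition Sym (X : Type) : group.
Proof.
  refine (@Group {p | isperm X p} (sym_mul X) (sym_one X) (sym_inv X) _ _ _ _ _);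
  intros; apply sym_ext;
  repeat match goal with p : {p | isperm X p} |- _ => destruct p as [[? ?] [? ?]] end;
  simpl; intros; auto.
Defined.

Definition mkperm (X : Type) (f f' : X -> X) (H1 : forall x, f (f' x) = x)
  (H2 : forall x, f' (f x) = x) : Sym X := exist _ (f, f') (conj H1 H2).

Definition app {X : Type} (p : Sym X) (x : X) : X := fst (proj1_sig p) x.
Definition appinv {X : Type} (p : Sym X) (x : X) : X := snd (proj1_sig p) x.

Lemma app_mul X (p q : Sym X) x : app (gmul p q) x = app p (app q x).
Proof. destruct p as [[? ?] [? ?]], q as [[? ?] [? ?]]; reflexivity. Qed.
Lemma app_one X x : app (gone : Sym X) x = x.
Proof. reflexivity. Qed.
Lemma app_inv X (p : Sym X) x : app (ginv p) x = appinv p x.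
Proof. destruct p as [[? ?] [? ?]]; reflexivity. Qed.
Lemma app_appinv X (p : Sym X) x : app p (appinv p x) = x.
Proof. destruct p as [[? ?] [? ?]]; unfold app, appinv; simpl; auto. Qed.
Lemma appinv_app X (p : Sym X) x : appinv p (app p x) = x.
Proof. destruct p as [[? ?] [? ?]]; unfold app, appinv; simpl; auto. Qed.
Lemma app_mkperm X f f' H1 H2 x : app (@mkperm X f f' H1 H2) x = f x.
Proof. reflexivity. Qed.
Lemma appinv_mkperm X f f' H1 H2 x : appinv (@mkperm X f f' H1 H2) x = f' x.
Proof. reflexivity. Qed.
Lemma perm_ext X (p q : Sym X) : (forall x, app p x = app q x) -> p = q.
Proof. apply sym_ext. Qed.

Lemma subgrp_eq {G : group} {P : G -> Prop} (hP : is_subgroup P) (x y : subgrp hP) :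
  proj1_sig x = proj1_sig y -> x = y.
Proof. apply sub_eq. Qed.
Lemma subgrp_mul {G : group} {P : G -> Prop} (hP : is_subgroup P) (x y : subgrp hP) :
  proj1_sig (gmul x y) = gmul (proj1_sig x) (proj1_sig y).
Proof. reflexivity. Qed.
Lemma subgrp_one {G : group} {P : G -> Prop} (hP : is_subgroup P) :
  proj1_sig (gone : subgrp hP) = gone.
Proof. reflexivity. Qed.
Lemma subgrp_inv {G : group} {P : G -> Prop} (hP : is_subgroup P) (x : subgrp hP) :
  proj1_sig (ginv x) = ginv (proj1_sig x).
Proof. reflexivity. Qed.

Lemma image_subgroup {G W : group} (f : G -> W) : is_hom f ->
  is_subgroup (fun y => exists x, f x = y).
Proof.
  intro hf. split; [|split].
  - exists gone. apply hom_one; auto.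
  - intros y z [a <-] [b <-]. exists (gmul a b). apply hf.
  - intros y [a <-]. exists (ginv a). apply hom_inv; auto.
Qed.

Lemma corestrict (C : group -> Prop) (hs : subgroup_closed C) {G W : group}
  (f : G -> W) : is_hom f -> C W ->
  exists Q : group, C Q /\ exists g : G -> Q, is_hom g /\ surjective g /\
    forall x, g x = gone <-> f x = gone.
Proof.
  intros hf hW. pose proof (image_subgroup f hf) as hI.
  exists (subgrp hI). split. apply hs; auto.
  exists (fun x => exist _ (f x) (ex_intro _ x eq_refl)). split; [|split].
  - intros x y. apply subgrp_eq. simpl. apply hf.
  - intros [y [x E]]. exists x. apply subgrp_eq. simpl. auto.
  - intros x; split; intro E.
    + apply (f_equal (@proj1_sig _ _)) in E. exact E.
    + apply subgrp_eq. exact E.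
Qed.


Lemma hom_inj_ker {G K : group} (f : G -> K) : is_hom f ->
  (forall x, f x = gone -> x = gone) -> injective f.
Proof.
  intros hf h x y E. apply g_eq1. apply h.
  rewrite hf, hom_inv, E by auto. apply gmulVr.
Qed.

Lemma iso_sym {G K : group} (f : G -> K) : is_hom f -> injective f -> surjective f ->
  isomorphic K G.
Proof.
  intros hf hi hs.
  pose (g := fun y => proj1_sig (constructive_indefinite_description _ (hs y))).
  assert (Hg : forall y, f (g y) = y).
  { intro y. unfold g. destruct (constructive_indefinite_description _ _); auto. }
  exists g. split; [|split].
  - intros x y. apply hi. rewrite hf, !Hg. reflexivity.
  - intros x y E. rewrite <- (Hg x), <- (Hg y), E. reflexivity.
  - intro x. exists (f x). apply hi. apply Hg.
Qed.

Lemma ext_closed (R : group -> Prop) (hR : root_class R) (G : group) (N : G -> Prop)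
  (hN : is_normal N) : R (subgrp (proj1 hN)) -> quotient_in R G N -> R G.
Proof.
  intros hsub hq. destruct hR as [hiso [_ [_ [_ hgr]]]].
  destruct (hgr G N (fun x => x = gone) hN) as [L [hL [hLK [Q [hQ [f [hf [hfs hfk]]]]]]]].
  - intros x ->. apply (proj1 (proj1 hN)).
  - split; [split; [|split]|].
    + reflexivity.
    + intros x y Ex Ey. simpl. rewrite Ex, Ey. apply gmul1l.
    + intros x Ex. simpl. rewrite Ex. apply g_inv1.
    + intros x g Ex. simpl. rewrite Ex, gmul1l. apply gmulVl.
  - exact hq.
  - exists (subgrp (proj1 hN)). split; auto. exists (fun x => x). split; [|split].
    + intros x y; reflexivity.
    + intros y; exists y; reflexivity.
    + intros x; split; intro E.
      * rewrite E. reflexivity.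
      * apply subgrp_eq. exact E.
  - assert (hi : injective f).
    { apply hom_inj_ker; auto. intros x Ex. apply hLK, hfk, Ex. }
    destruct (iso_sym f hf hi hfs) as [g Hg]. apply (hiso Q G); auto. exists g; auto.
Qed.

Lemma wr_closed (R : group -> Prop) (hR : root_class R) (P Q : group) :
  R P -> R Q -> R (wr P Q).
Proof.
  intros hP hQ. pose proof hR as [hiso [_ [_ [_ hgr]]]].
  assert (hH : is_normal (G := wr P Q) (fun a => snd a = gone)).
  { split; [split; [|split]|].
    - reflexivity.
    - intros x y Ex Ey. simpl. rewrite Ex, Ey. apply gmul1l.
    - intros x Ex. simpl. rewrite Ex. apply g_inv1.
    - intros x g Ex. simpl. rewrite Ex, gmul1l. apply gmulVl. }
  destruct (hgr (wr P Q) (fun a => snd a = gone) (fun a => snd a = gone /\ fst a gone = gone) hH)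
    as [L [hL [hLK [Q' [hQ' [f [hf [hfs hfk]]]]]]]].
  - intros x [E _]; exact E.
  - split; [split; [|split]|].
    + split; reflexivity.
    + intros [x px] [y py] [Ex1 Ex2] [Ey1 Ey2]. simpl in *. split.
      * rewrite Ex1, Ey1. apply gmul1l.
      * rewrite Ex1, gmul1r, Ex2, Ey2. apply gmul1l.
    + intros [x px] [Ex1 Ex2]. simpl in *. split.
      * rewrite Ex1. apply g_inv1.
      * rewrite Ex1, g_inv1, gmul1r, Ex2. apply g_inv1.
    + intros [x px] [g pg] [Ex1 Ex2]. simpl in *. split.
      * rewrite Ex1, pg. rewrite ?g_inv1, ?gmul1l, ?gmul1r. reflexivity.
      * rewrite ?Ex1, ?pg. repeat rewrite ?g_inv1, ?gmul1l, ?gmul1r, ?Ex1, ?pg.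
        rewrite Ex2, gmul1l. apply gmulVl.
  - exists Q. split; auto. exists (@snd _ _). split; [|split].
    + intros x y; reflexivity.
    + intros q; exists ((fun _ => gone), q); reflexivity.
    + intros x; split; auto.
  - exists P. split; auto. exists (fun x => fst (proj1_sig x) gone). split; [|split].
    + intros [x px] [y py]. simpl. rewrite gmul1l, px. reflexivity.
    + intros p. exists (exist (fun a : wr P Q => snd a = gone) ((fun _ => p), gone) eq_refl).
      reflexivity.
    + intros [x px]; simpl; split; auto. intros [_ E]; exact E.
  - assert (hi : injective f).
    { apply hom_inj_ker; auto. intros x Ex. apply hfk in Ex.
      assert (E1 : snd x = gone) by (apply hLK in Ex; apply Ex).
      assert (E2 : forall w, fst x w = gone).
      { intro w. pose proof (proj2 hL x ((fun _ => gone), ginv w) Ex) as Ec.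
        apply hLK in Ec. destruct Ec as [_ Ec]. simpl in Ec.
        rewrite g_inv1, !gmul1l, gmul1r, g_invK in Ec. exact Ec. }
      destruct x as [x1 x2]. simpl in *. subst x2. change ((x1, (gone : Q)) = ((fun _ => (gone : P)), (gone : Q))). f_equal.
      apply functional_extensionality; auto. }
    destruct (iso_sym f hf hi hfs) as [g Hg]. apply (hiso Q' (wr P Q)); auto. exists g; auto.
Qed.


Lemma min_exists (P : nat -> Prop) : (exists n, P n) -> exists n, P n /\ forall m, m < n -> ~ P m.
Proof.
  intros [n Hn]. induction n as [n IH] using (well_founded_induction Wf_nat.lt_wf).
  destruct (classic (exists m, m < n /\ P m)) as [[m [Hm Pm]]|Hno].
  - exact (IH m Hm Pm).
  - exists n. split; auto. intros m Hm Pm. apply Hno; eauto.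
Qed.

Definition Ord {G : group} (z : G) (N : nat) : Prop :=
  1 < N /\ gpow z N = gone /\ forall L, 1 <= L < N -> gpow z L <> gone.

Definition delta {P : group} (z : P) (y : P) : P := if dec (y = gone) then z else gone.

Fixpoint pwf {P : group} (z : P) (k : nat) (x : P) : P :=
  match k with 0 => gone | S k => gmul (pwf z k x) (delta z (gmul x (gpow z k))) end.

Lemma zeta_pow {P : group} (z : P) k :
  gpow (G := wr P P) (delta z, z) k = (pwf z k, gpow z k).
Proof.
  induction k; simpl. reflexivity.
  rewrite IHk. reflexivity.
Qed.

Lemma pwf_pow {P : group} (z : P) k x : exists c, pwf z k x = gpow z c.
Proof.
  induction k; simpl. exists 0; reflexivity.
  destruct IHk as [c Hc]. rewrite Hc. unfold delta. destruct (dec _).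
  - exists (S c). reflexivity.
  - exists c. apply gmul1r.
Qed.

Lemma pwf_block {P : group} (z : P) N (HN : gpow z N = gone) a r x :
  pwf z (N * a + r) x = gmul (pwf z (N * a) x) (pwf z r x).
Proof.
  induction r. rewrite Nat.add_0_r; simpl; rewrite gmul1r; auto.
  rewrite Nat.add_succ_r. simpl. rewrite IHr, <- gmulA. f_equal. f_equal. f_equal. f_equal.
  rewrite gpow_add, gpow_mul, HN, gpow_one, gmul1l. reflexivity.
Qed.

Lemma pwf_mul {P : group} (z : P) N (HN : gpow z N = gone) a x :
  pwf z (N * a) x = gpow (pwf z N x) a.
Proof.
  induction a. rewrite Nat.mul_0_r. reflexivity.
  rewrite Nat.mul_succ_r, pwf_block by auto. simpl. rewrite IHa. reflexivity.
Qed.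

Lemma pwf_one {P : group} (z : P) N (Hz : Ord z N) r : 1 <= r <= N -> pwf z r gone = z.
Proof.
  destruct Hz as [H1 [H2 H3]]. induction r; intro Hr. lia.
  destruct r.
  - simpl. unfold delta. rewrite gmul1l, gmul1l. destruct (dec _) as [_|n]; auto.
    exfalso; apply n; reflexivity.
  - simpl pwf. simpl in IHr. rewrite IHr by lia. unfold delta.
    destruct (dec _) as [e|_]. 2: apply gmul1r.
    exfalso. rewrite gmul1l in e. apply (H3 (S r)); [lia|]. exact e.
Qed.

Lemma ord_sq (P : group) (z : P) N : Ord z N -> Ord (G := wr P P) (delta z, z) (N * N).
Proof.
  intro Hz. pose proof Hz as [H1 [H2 H3]]. split; [|split].
  - nia.
  - rewrite zeta_pow. change (gone : wr P P) with ((fun _ : P => (gone : P)), (gone : P)).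
    f_equal.
    + apply functional_extensionality. intro x. rewrite pwf_mul by auto.
      destruct (pwf_pow z N x) as [c ->]. rewrite <- gpow_mul, Nat.mul_comm, gpow_mul, H2.
      apply gpow_one.
    + rewrite gpow_mul, H2. apply gpow_one.
  - intros L HL E. rewrite zeta_pow in E.
    assert (E1 := f_equal (fun p => fst p gone) E). assert (E2 := f_equal snd E).
    simpl in E1, E2.
    pose (a := L / N). pose (r := L mod N).
    assert (HLar : L = N * a + r) by (apply Nat.div_mod_eq).
    assert (Hr : r < N) by (apply Nat.mod_upper_bound; lia).
    rewrite HLar, gpow_add, gpow_mul, H2, gpow_one, gmul1l in E2.
    destruct r as [|r'] eqn:Er.
    + rewrite Nat.add_0_r in HLar. rewrite HLar, pwf_mul in E1 by auto.
      rewrite (pwf_one z N Hz N) in E1 by lia.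
      apply (H3 a); auto. split.
      * destruct a; lia.
      * destruct (Nat.lt_ge_cases a N); auto. exfalso. nia.
    + apply (H3 (S r')); auto. lia.
Qed.

Lemma big_order (R : group -> Prop) (hR : root_class R) n :
  exists D, R D /\ exists d : D, forall L, 1 <= L <= n -> gpow d L <> gone.
Proof.
  pose proof hR as [_ [[P0 [HP0 [z Hz]]] _]].
  destruct (classic (exists L, 1 <= L /\ gpow z L = gone)) as [Hex|Hno].
  2:{ exists P0; split; auto. exists z. intros L HL E. apply Hno. exists L; split; auto; lia. }
  destruct (min_exists _ Hex) as [N [[HN1 HN2] HNmin]].
  assert (Hord : Ord z N).
  { split; [|split]; auto.
    - destruct N as [|[|N]]; try lia. exfalso. apply Hz. simpl in HN2. rewrite gmul1l in HN2. exact HN2.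
    - intros L HL E. apply (HNmin L); [lia|]. split; auto; lia. }
  assert (Hgen : forall n, exists D, R D /\ exists (d : D) M, Ord d M /\ n < M).
  { induction n0 as [|n0 IH].
    - exists P0; split; auto. exists z, N. split; [exact Hord | destruct Hord; lia].
    - destruct IH as [D [HD [d [M [HM HnM]]]]].
      exists (wr D D). split. apply wr_closed; auto.
      exists (delta d, d), (M * M). split. apply ord_sq; auto.
      destruct HM. nia. }
  destruct (Hgen n) as [D [HD [d [M [[_ [_ HM]] HnM]]]]].
  exists D; split; auto. exists d. intros L HL. apply HM. lia.
Qed.


Definition sgn {G : group} (b : bool) (x : G) : G := if b then x else ginv x.

Fixpoint evalw {X : Type} {G : group} (mu : X -> G) (w : list (X * bool)) : G :=
  match w with
  | [] => gone
  | (c, b) :: w' => gmul (sgn b (mu c)) (evalw mu w')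
  end.

Fixpoint reduced {X : Type} (w : list (X * bool)) : Prop :=
  match w with
  | [] => True
  | a :: w' => match w' with
               | [] => True
               | b :: _ => ~ (fst a = fst b /\ snd b = negb (snd a))
               end /\ reduced w'
  end.

Lemma red_tail {X} (a : X * bool) w : reduced (a :: w) -> reduced w.
Proof. simpl. tauto. Qed.

Lemma red_app_r {X} (l1 l2 : list (X * bool)) : reduced (l1 ++ l2) -> reduced l2.
Proof. induction l1; simpl; auto. intro H. apply IHl1. apply (red_tail a). exact H. Qed.

Lemma sgn_one {G : group} b : sgn b (gone : G) = gone.
Proof. destruct b; simpl; auto using g_inv1. Qed.

Lemma sgn_inv_neq {G : group} b (x : G) : x <> gone -> sgn b x <> gone.
Proof. destruct b; simpl; auto. intros H E. apply H. apply g_inv_eq1. auto. Qed.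

Definition dpow {G : group} (d : G) (s : bool) (k : nat) : G := sgn s (gpow d k).

Lemma dpow_S {G : group} (d : G) s k : gmul (dpow d s k) (sgn s d) = dpow d s (S k).
Proof. destruct s; unfold dpow; simpl; auto. rewrite <- g_invM, gpow_comm. reflexivity. Qed.

Lemma dpow_0 {G : group} (d : G) s : dpow d s 0 = gone.
Proof. unfold dpow; simpl. apply sgn_one. Qed.

Lemma evalw_const {X} {G : group} (mu : X -> G) c b w :
  (forall a, In a w -> a = (c, b)) -> evalw mu w = gpow (sgn b (mu c)) (length w).
Proof.
  induction w as [|a w IH]; intro H; simpl; auto.
  rewrite (H a) by (left; auto). simpl. rewrite IH by (intros; apply H; right; auto).
  rewrite gpow_comm. reflexivity.
Qed.

Lemma red_const {X} (c : X) b w :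
  reduced ((c, b) :: w) -> (forall a, In a w -> fst a = c) -> forall a, In a ((c, b) :: w) -> a = (c, b).
Proof.
  revert b. induction w as [|a' w IH]; intros b Hr Hc a Ha.
  - destruct Ha as [<-|[]]; auto.
  - destruct Ha as [<-|Ha]; auto. destruct a' as [c' b']. simpl in Hc.
    assert (c' = c) by (apply (Hc (c', b')); left; auto). subst c'.
    simpl in Hr. destruct Hr as [Hn Hr].
    assert (b' = b) by (destruct b, b'; simpl in *; first [reflexivity | exfalso; apply Hn; auto]).
    subst b'. apply (IH b Hr); auto.
Qed.

Fixpoint tr {X : Type} {D : group} (cs : X) (d : D) (g : D) (w : list (X * bool))
  : list ((X * D) * bool) :=
  match w with
  | [] => []
  | (c, b) :: w' => if dec (c = cs) then tr cs d (gmul g (sgn b d)) w'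
                    else ((c, g), b) :: tr cs d g w'
  end.

Lemma tr_length {X} {D : group} (cs : X) (d : D) g w : length (tr cs d g w) <= length w.
Proof. revert g; induction w as [|[c b] w IH]; intro g; simpl; auto.
  destruct (dec _); simpl. - specialize (IH (gmul g (sgn b d))); lia. - specialize (IH g); lia. Qed.

Lemma tr_nonempty {X} {D : group} (cs : X) (d : D) g w :
  (exists a, In a w /\ fst a <> cs) -> tr cs d g w <> [].
Proof.
  revert g; induction w as [|[c b] w IH]; intros g [a [Ha Hn]]; simpl. destruct Ha.
  destruct (dec _) as [e|n]. 2: discriminate.
  apply IH. destruct Ha as [<-|Ha]. simpl in Hn; contradiction. eauto.
Qed.

Lemma rep_shift {A} (x : A) k l : repeat x k ++ x :: l = x :: repeat x k ++ l.
Proof. induction k; simpl; auto. rewrite IHk. reflexivity. Qed.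

Definition headok {X D : Type} (c : X) (g : D) (e : bool) (l : list ((X * D) * bool)) : Prop :=
  match l with [] => True | y :: _ => ~ (fst y = (c, g) /\ snd y = negb e) end.

Lemma tr_head {X} {D : group} (cs : X) (d : D) w :
  forall c e k s g, c <> cs ->
  reduced ((c, e) :: repeat (cs, s) k ++ w) ->
  (forall j, 1 <= j <= k + length w -> gpow d j <> gone) ->
  headok c g e (tr cs d (gmul g (dpow d s k)) w).
Proof.
  induction w as [|[c' b'] w IH]; intros c e k s g Hc Hr Hbig; simpl; auto.
  destruct (dec (c' = cs)) as [E|E].
  - subst c'. rewrite <- gmulA.
    assert (Hs : k = 0 \/ b' = s).
    { destruct k as [|k]; auto. right.
      assert (Hr' : reduced ((cs, s) :: (cs, b') :: w)).
      { replace ((c, e) :: repeat (cs, s) (S k) ++ (cs, b') :: w) with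
          (((c, e) :: repeat (cs, s) k) ++ (cs, s) :: (cs, b') :: w) in Hr.
        - apply red_app_r in Hr; auto.
        - simpl. rewrite rep_shift. reflexivity. }
      simpl in Hr'. destruct Hr' as [Hn _].
      destruct b', s; simpl in *; auto; exfalso; apply Hn; auto. }
    destruct Hs as [Hk|Hb]; [subst k|subst s].
    + rewrite dpow_0, gmul1l. specialize (IH c e 1 b' g Hc).
      simpl in IH. unfold dpow in IH. simpl in IH. rewrite gmul1l in IH. apply IH.
      * exact Hr.
      * intros j Hj. apply Hbig. simpl. lia.
    + rewrite dpow_S. apply IH; auto.
      * replace ((c, e) :: repeat (cs, b') (S k) ++ w) with
          ((c, e) :: repeat (cs, b') k ++ (cs, b') :: w); auto.
        simpl. rewrite rep_shift. reflexivity.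
      * intros j Hj. apply Hbig. simpl. lia.
  - simpl. intros [E1 E2]. injection E1 as E1 E3. subst c'.
    destruct k as [|k].
    + simpl in Hr. destruct Hr as [Hn _]. apply Hn. simpl. auto.
    + assert (E4 : dpow d s (S k) = gone).
      { apply (g_cancel_l g). rewrite gmul1r. exact E3. }
      unfold dpow in E4. destruct s; simpl in E4.
      * apply (Hbig (S k)); [simpl; lia|]. exact E4.
      * apply (Hbig (S k)); [simpl; lia|]. apply g_inv_eq1. exact E4.
Qed.

Lemma tr_reduced {X} {D : group} (cs : X) (d : D) w :
  forall g, reduced w -> (forall j, 1 <= j <= length w -> gpow d j <> gone) ->
  reduced (tr cs d g w).
Proof.
  induction w as [|[c b] w IH]; intros g Hr Hbig; simpl; auto.
  destruct (dec (c = cs)) as [E|E].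
  - apply IH. apply (red_tail _ _ Hr). intros j Hj; apply Hbig; simpl; lia.
  - split.
    + pose proof (tr_head cs d w c b 0 true g E) as H.
      rewrite dpow_0, gmul1r in H. specialize (H Hr). unfold headok in H.
      destruct (tr cs d g w); auto. simpl. intros [E1 E2]. apply H.
      intros j Hj; apply Hbig; simpl; lia. auto.
    + apply IH. apply (red_tail _ _ Hr). intros j Hj; apply Hbig; simpl; lia.
Qed.

Lemma wr_fst_mul (P Q : group) (a b : wr P Q) x :
  fst (gmul a b) x = gmul (fst a x) (fst b (gmul x (snd a))).
Proof. reflexivity. Qed.

Lemma tr_eval {X} {P D : group} (cs : X) (d : D) (mu' : X * D -> P) w :
  forall g, fst (evalw (G := wr P D)
      (fun c => if dec (c = cs) then ((fun _ => gone), d) else ((fun x => mu' (c, x)), gone)) w) g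
    = evalw mu' (tr cs d g w).
Proof.
  induction w as [|[c b] w IH]; intro g; simpl. reflexivity.
  destruct (dec (c = cs)) as [E|E].
  - rewrite <- IH. destruct b; simpl.
    + rewrite gmul1l. reflexivity.
    + rewrite g_inv1, gmul1l. reflexivity.
  - simpl. rewrite <- IH. destruct b; simpl.
    + rewrite gmul1r. reflexivity.
    + rewrite g_inv1, !gmul1r. reflexivity.
Qed.

Lemma free_sep (R : group -> Prop) (hR : root_class R) n :
  forall (X : Type) (w : list (X * bool)), length w <= n -> w <> [] -> reduced w ->
  exists P, R P /\ exists mu : X -> P, evalw mu w <> gone.
Proof.
  induction n as [|n IHn]; intros X w Hl Hne Hr.
  { destruct w; simpl in Hl; [contradiction|lia]. }
  destruct w as [|[cs b0] w']; [contradiction|].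
  destruct (big_order R hR (length ((cs, b0) :: w'))) as [D [HD [d Hd]]].
  destruct (classic (exists a, In a ((cs, b0) :: w') /\ fst a <> cs)) as [Hex|Hall].
  - set (w2 := tr cs d gone ((cs, b0) :: w')).
    assert (Hl2 : length w2 <= n).
    { unfold w2. simpl. destruct (dec (cs = cs)) as [_|n0]; [|contradiction].
      pose proof (tr_length cs d (gmul gone (sgn b0 d)) w'). simpl in Hl. lia. }
    assert (Hne2 : w2 <> []) by (apply tr_nonempty; auto).
    assert (Hr2 : reduced w2) by (apply tr_reduced; auto).
    destruct (IHn _ w2 Hl2 Hne2 Hr2) as [P' [HP' [mu' Hmu']]].
    exists (wr P' D). split. apply wr_closed; auto.
    exists (fun c => if dec (c = cs) then ((fun _ => gone), d) else ((fun x => mu' (c, x)), gone)).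
    intro E. apply Hmu'. unfold w2. rewrite <- tr_eval.
    apply (f_equal (fun p : wr P' D => fst p gone)) in E. exact E.
  - exists D. split; auto. exists (fun _ => d).
    rewrite (evalw_const (fun _ : X => d) cs b0).
    + destruct b0; unfold sgn.
      * apply Hd. simpl; lia.
      * rewrite gpow_inv. intro E. apply (Hd (length ((cs, false) :: w'))). simpl; lia.
        apply g_inv_eq1. exact E.
    + apply red_const; auto. intros a Ha. apply NNPP. intro Hn. apply Hall. exists a.
      split; auto. right; auto.
Qed.


Definition rep {A : group} (H : A -> Prop) (a : A) : A :=
  if dec (H a) then gone else epsilon (inhabits gone) (fun b => H (gmul a (ginv b))).

Lemma sg_one {A : group} {H : A -> Prop} (hH : is_subgroup H) : H gone.
Proof. apply hH. Qed.
Lemma sg_mul {A : group} {H : A -> Prop} (hH : is_subgroup H) x y : H x -> H y -> H (gmul x y).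
Proof. apply hH. Qed.
Lemma sg_inv {A : group} {H : A -> Prop} (hH : is_subgroup H) x : H x -> H (ginv x).
Proof. apply hH. Qed.
Lemma sg_inv' {A : group} {H : A -> Prop} (hH : is_subgroup H) x : H (ginv x) -> H x.
Proof. intro h. rewrite <- (g_invK x). apply sg_inv; auto. Qed.

Lemma rep_R1 {A : group} {H : A -> Prop} (hH : is_subgroup H) a : H (gmul a (ginv (rep H a))).
Proof.
  unfold rep. destruct (dec (H a)) as [h|h].
  - rewrite g_inv1, gmul1r. exact h.
  - apply (epsilon_spec (inhabits gone) (fun b => H (gmul a (ginv b)))).
    exists a. rewrite gmulVr. apply sg_one; auto.
Qed.

Lemma rep_R2 {A : group} {H : A -> Prop} (hH : is_subgroup H) a b :
  H (gmul a (ginv b)) -> rep H a = rep H b.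
Proof.
  intro hab. unfold rep.
  assert (Hiff : forall x, H (gmul a x) <-> H (gmul b x)).
  { intro x. split; intro hx.
    - replace (gmul b x) with (gmul (ginv (gmul a (ginv b))) (gmul a x)).
      + apply sg_mul; auto. apply sg_inv; auto.
      + rewrite g_invM, g_invK, <- gmulA, g_mulKl. reflexivity.
    - replace (gmul a x) with (gmul (gmul a (ginv b)) (gmul b x)).
      + apply sg_mul; auto.
      + rewrite <- gmulA, g_mulKl. reflexivity. }
  destruct (dec (H a)) as [ha|ha]; destruct (dec (H b)) as [hb|hb]; auto.
  - exfalso. apply hb. rewrite <- gmul1r. apply Hiff. rewrite gmul1r. auto.
  - exfalso. apply ha. rewrite <- gmul1r. apply Hiff. rewrite gmul1r. auto.
  - f_equal. apply functional_extensionality. intro x. apply propositional_extensionality.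
    apply Hiff.
Qed.

Lemma rep_R3 {A : group} {H : A -> Prop} (hH : is_subgroup H) a : rep H a = gone -> H a.
Proof. intro E. pose proof (rep_R1 hH a) as h. rewrite E, g_inv1, gmul1r in h. exact h. Qed.

Lemma rep_R4 {A : group} {H : A -> Prop} a : H a -> rep H a = gone.
Proof. intro h. unfold rep. destruct (dec (H a)); tauto. Qed.

Lemma rep_R5 {A : group} {H : A -> Prop} (hH : is_subgroup H) a : rep H (rep H a) = rep H a.
Proof.
  apply rep_R2; auto. pose proof (sg_inv hH _ (rep_R1 hH a)) as h.
  rewrite g_invM, g_invK in h. exact h.
Qed.

Fixpoint validl {A : group} (H : A -> Prop) (l : list (bool * A)) : Prop :=
  match l with
  | [] => True
  | (e, r) :: l' => rep H r = r /\
      match l' with [] => True | (e', _) :: _ => r = gone -> e' = e end /\ validl H l'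
  end.

Definition tstep {A : group} (H : A -> Prop) (e : bool) (p : A * list (bool * A)) : A * list (bool * A) :=
  let (a0, l) := p in
  if dec (H a0) then
    match l with
    | (e', r') :: l' => if Bool.eqb e' (negb e) then (gmul a0 r', l') else (a0, (e, gone) :: l)
    | [] => (a0, [(e, gone)])
    end
  else (gmul a0 (ginv (rep H a0)), (e, rep H a0) :: l).

Lemma valid_tstep {A : group} {H : A -> Prop} (hH : is_subgroup H) e p :
  validl H (snd p) -> validl H (snd (tstep H e p)).
Proof.
  destruct p as [a0 l]. simpl. intro hv. destruct (dec (H a0)) as [ha|ha].
  - destruct l as [|[e' r'] l'].
    + simpl. split; auto. apply rep_R4, sg_one; auto.
    + destruct (Bool.eqb e' (negb e)) eqn:Ee.
      * simpl in *. tauto.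
      * simpl. split; [apply rep_R4, sg_one; auto|]. split; auto.
        intros _. destruct e, e'; simpl in Ee; auto; discriminate.
  - simpl. split; [apply rep_R5; auto|]. split; auto.
    destruct l as [|[e' r'] l']; auto. intro E. exfalso. apply ha. apply rep_R3; auto.
Qed.

Lemma tstep_L1 {A : group} {H : A -> Prop} (hH : is_subgroup H) b s r' l' :
  H b -> validl H ((s, r') :: l') -> tstep H s (gmul b r', l') = (b, (s, r') :: l').
Proof.
  intros hb hv. simpl in hv. destruct hv as [hr [hh hv]]. unfold tstep.
  destruct (dec (H (gmul b r'))) as [h|h].
  - assert (Hr' : r' = gone).
    { rewrite <- hr. apply rep_R4. replace r' with (gmul (ginv b) (gmul b r')) by apply g_mulKl.
      apply sg_mul; auto. apply sg_inv; auto. }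
    subst r'. rewrite gmul1r. destruct l' as [|[e'' r''] l''].
    + reflexivity.
    + rewrite (hh eq_refl). destruct s; reflexivity.
  - assert (E : rep H (gmul b r') = r').
    { transitivity (rep H r'); [|exact hr]. apply rep_R2; auto.
      rewrite <- gmulA, gmulVr, gmul1r. exact hb. }
    rewrite E, <- gmulA, gmulVr, gmul1r. reflexivity.
Qed.

Lemma tstep_L2 {A : group} {H : A -> Prop} b s r l :
  H b -> tstep H s (b, (negb s, r) :: l) = (gmul b r, l).
Proof.
  intro hb. unfold tstep. destruct (dec (H b)) as [_|n]; [|contradiction].
  rewrite Bool.eqb_reflx. reflexivity.
Qed.

Lemma tstep_inv {A : group} {H : A -> Prop} (hH : is_subgroup H) e p :
  validl H (snd p) -> tstep H (negb e) (tstep H e p) = p.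
Proof.
  destruct p as [a0 l]. simpl. intro hv. destruct (dec (H a0)) as [ha|ha].
  - destruct l as [|[e' r'] l'].
    + rewrite <- (negb_involutive e) at 2. rewrite tstep_L2 by auto. rewrite gmul1r. reflexivity.
    + destruct (Bool.eqb e' (negb e)) eqn:Ee.
      * apply Bool.eqb_prop in Ee. subst e'. apply tstep_L1; auto.
      * rewrite <- (negb_involutive e) at 2. rewrite tstep_L2 by auto. rewrite gmul1r. reflexivity.
  - rewrite <- (negb_involutive e) at 2. rewrite tstep_L2.
    + rewrite <- gmulA, gmulVl, gmul1r. reflexivity.
    + apply rep_R1; auto.
Qed.

Definition hmul {A : group} (h : A) (p : A * list (bool * A)) : A * list (bool * A) :=
  (gmul h (fst p), snd p).

Lemma tstep_L2t {A : group} {H : A -> Prop} b r l :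
  H b -> tstep H false (b, (true, r) :: l) = (gmul b r, l).
Proof. apply (tstep_L2 (H := H) b false r l). Qed.

Lemma tstep_rel {A : group} {H : A -> Prop} (hH : is_subgroup H) h p :
  H h -> validl H (snd p) ->
  tstep H false (hmul h (tstep H true p)) = hmul h p.
Proof.
  destruct p as [a0 l]. intros hh hv. unfold hmul at 2. simpl fst; simpl snd.
  assert (hha : H a0 -> H (gmul h a0)) by (intro; apply sg_mul; auto).
  unfold tstep at 2. destruct (dec (H a0)) as [ha|ha].
  - destruct l as [|[e' r'] l'].
    + unfold hmul; cbn [fst snd]. rewrite tstep_L2t by auto. rewrite gmul1r. reflexivity.
    + destruct (Bool.eqb e' (negb true)) eqn:Ee.
      * apply Bool.eqb_prop in Ee. simpl in Ee. subst e'. unfold hmul; cbn [fst snd].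
        rewrite gmulA. apply tstep_L1; auto.
      * unfold hmul; cbn [fst snd]. rewrite tstep_L2t by auto. rewrite gmul1r. reflexivity.
  - unfold hmul; cbn [fst snd]. rewrite tstep_L2t.
    + rewrite <- !gmulA, gmulVl, gmul1r. reflexivity.
    + apply sg_mul; auto. apply rep_R1; auto.
Qed.


Definition NF {A : group} (H : A -> Prop) := {p : A * list (bool * A) | validl H (snd p)}.

Lemma nf_eq {A : group} {H : A -> Prop} (w w' : NF H) : proj1_sig w = proj1_sig w' -> w = w'.
Proof. destruct w, w'; simpl; intros ->; f_equal; apply proof_irrelevance. Qed.

Definition actA {A : group} {H : A -> Prop} (a : A) (w : NF H) : NF H :=
  exist _ (gmul a (fst (proj1_sig w)), snd (proj1_sig w)) (proj2_sig w).

Definition tNF {A : group} {H : A -> Prop} (hH : is_subgroup H) (e : bool) (w : NF H) : NF H :=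
  exist _ (tstep H e (proj1_sig w)) (valid_tstep hH e _ (proj2_sig w)).

Definition permA {A : group} (H : A -> Prop) (a : A) : Sym (NF H).
Proof.
  refine (mkperm (NF H) (actA a) (actA (ginv a)) _ _); intro w; apply nf_eq; simpl;
  rewrite ?g_mulKr, ?g_mulKl; destruct (proj1_sig w); reflexivity.
Defined.

Definition permT {A : group} {H : A -> Prop} (hH : is_subgroup H) : Sym (NF H).
Proof.
  refine (mkperm (NF H) (tNF hH true) (tNF hH false) _ _); intro w; apply nf_eq; simpl.
  - apply (tstep_inv hH false). apply (proj2_sig w).
  - apply (tstep_inv hH true). apply (proj2_sig w).
Defined.

Fixpoint evl {A G : group} (i : A -> G) (t : G) (l : list (bool * A)) : G :=
  match l with
  | [] => gone
  | (e, r) :: l' => gmul (sgn e t) (gmul (i r) (evl i t l'))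
  end.

Definition evp {A G : group} (i : A -> G) (t : G) (p : A * list (bool * A)) : G :=
  gmul (i (fst p)) (evl i t (snd p)).

Lemma comm_t {A G : group} (H : A -> Prop) (i : A -> G) (t : G) :
  (forall h, H h -> gmul (ginv t) (gmul (i h) t) = i h) ->
  forall e h, H h -> gmul (sgn e t) (i h) = gmul (i h) (sgn e t).
Proof.
  intros hrel e h hh. specialize (hrel h hh).
  assert (E : gmul (i h) t = gmul t (i h)).
  { rewrite <- hrel at 2. rewrite g_mulKr. reflexivity. }
  destruct e; simpl; auto.
  apply (g_cancel_r t). rewrite <- (gmulA (i h)), gmulVl, gmul1r.
  rewrite <- gmulA. exact hrel.
Qed.

Lemma sgn_neg {G : group} (t : G) e : gmul (sgn e t) (sgn (negb e) t) = gone.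
Proof. destruct e; simpl. apply gmulVr. apply gmulVl. Qed.

Lemma ev_tstep {A G : group} (H : A -> Prop) (hH : is_subgroup H) (i : A -> G) (t : G) :
  is_hom i -> (forall h, H h -> gmul (ginv t) (gmul (i h) t) = i h) ->
  forall e p, evp i t (tstep H e p) = gmul (sgn e t) (evp i t p).
Proof.
  intros hi hrel e [a0 l]. pose proof (comm_t H i t hrel) as hc.
  unfold tstep, evp. destruct (dec (H a0)) as [ha|ha].
  - destruct l as [|[e' r'] l'].
    + simpl. rewrite (hom_one i hi). rewrite !gmul1l, !gmul1r, hc by auto. reflexivity.
    + destruct (Bool.eqb e' (negb e)) eqn:Ee.
      * apply Bool.eqb_prop in Ee. subst e'. simpl. rewrite hi.
        rewrite !gmulA, hc by auto. rewrite <- (gmulA (i a0) (sgn e t)), sgn_neg, gmul1r.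
        reflexivity.
      * simpl. rewrite (hom_one i hi). rewrite gmul1l, !gmulA, hc by auto. reflexivity.
  - simpl. rewrite !gmulA. f_equal.
    rewrite <- (hc e (gmul a0 (ginv (rep H a0)))) by (apply rep_R1; auto).
    rewrite <- gmulA, <- hi, g_mulKr'. reflexivity.
Qed.

Definition coc {X : Type} {G : group} (ev : X -> G) (s : Sym X) : Sym (X * G)%type.
Proof.
  refine (mkperm (X * G)%type
    (fun wg => (app s (fst wg), gmul (ev (app s (fst wg))) (gmul (ginv (ev (fst wg))) (snd wg))))
    (fun wg => (appinv s (fst wg), gmul (ev (appinv s (fst wg))) (gmul (ginv (ev (fst wg))) (snd wg))))
    _ _); intros [w g]; simpl.
  - rewrite app_appinv, g_mulKl, g_mulKr. reflexivity.
  - rewrite appinv_app, g_mulKl, g_mulKr. reflexivity.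
Defined.

Definition trn {X : Type} {G : group} (s : Sym X) (x : G) : Sym (X * G)%type.
Proof.
  refine (mkperm (X * G)%type
    (fun wg => (app s (fst wg), gmul x (snd wg)))
    (fun wg => (appinv s (fst wg), gmul (ginv x) (snd wg))) _ _); intros [w g]; simpl.
  - rewrite app_appinv, g_mulKr. reflexivity.
  - rewrite appinv_app, g_mulKl. reflexivity.
Defined.

Lemma pair_ext {X Y : Type} (p q : X * Y) : fst p = fst q -> snd p = snd q -> p = q.
Proof. destruct p, q; simpl; intros -> ->; reflexivity. Qed.

Lemma hnn_nf (A : group) (H : A -> Prop) (hH : is_subgroup H) (G : group) (i : A -> G) (t : G)
  (hG : is_special_HNN A H G i t) (g : G) :
  g <> gone -> exists a0 l, validl H l /\ g = gmul (i a0) (evl i t l) /\ (l = [] -> a0 <> gone).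
Proof.
  intro hg. destruct hG as [hi [hrel [hU huniq]]].
  destruct (hU (Sym (NF H)) (permA H) (permT hH)) as [psi [hpsi [hpsiA hpsiT]]].
  - intros a b. apply perm_ext. intro w. rewrite app_mul. apply nf_eq. simpl.
    rewrite gmulA. reflexivity.
  - intros h hh. apply perm_ext. intro w. rewrite !app_mul, app_inv. apply nf_eq.
    simpl. pose proof (tstep_rel hH h (proj1_sig w) hh (proj2_sig w)) as E.
    unfold hmul in E. exact E.
  - set (ev := fun w : NF H => evp i t (proj1_sig w)).
    assert (hom1 : is_hom (fun x => trn (psi x) x)).
    { intros x y. apply perm_ext. intros [w g0]. rewrite app_mul. unfold trn.
      rewrite !app_mkperm. simpl. rewrite hpsi, app_mul, gmulA. reflexivity. }
    assert (hom2 : is_hom (fun x => coc ev (psi x))).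
    { intros x y. apply perm_ext. intros [w g0]. rewrite app_mul. unfold coc.
      rewrite !app_mkperm. simpl. rewrite hpsi, app_mul. apply pair_ext; simpl; auto.
      rewrite !gmulA, g_mulKr'. reflexivity. }
    assert (Heq : forall x, trn (psi x) x = coc ev (psi x)).
    { apply (huniq _ _ _ hom1 hom2).
      - intro a. apply perm_ext. intros [w g0]. unfold trn, coc. rewrite !app_mkperm.
        simpl. rewrite hpsiA. apply pair_ext; simpl; auto.
        unfold ev. simpl. unfold evp. simpl. rewrite hi, <- !gmulA.
        rewrite (gmulA (i (fst (proj1_sig w)))), g_mulKr. reflexivity.
      - apply perm_ext. intros [w g0]. unfold trn, coc. rewrite !app_mkperm.
        simpl. rewrite hpsiT. apply pair_ext; simpl; auto.
        unfold ev. simpl. rewrite (ev_tstep H hH i t hi hrel true). simpl.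
        rewrite <- !gmulA, g_mulKr. reflexivity. }
    set (e0 := exist (fun p : A * list (bool * A) => validl H (snd p)) (gone, []) I : NF H).
    assert (Hg := f_equal (fun s => snd (app s (e0, gone))) (Heq g)).
    unfold trn, coc in Hg. rewrite !app_mkperm in Hg. simpl in Hg.
    assert (Hev0 : ev e0 = gone).
    { unfold ev, evp. simpl. rewrite (hom_one i hi). apply gmul1l. }
    rewrite Hev0, g_inv1, !gmul1r in Hg.
    destruct (app (psi g) e0) as [[a0 l] hv] eqn:Ew.
    exists a0, l. split; [exact hv|]. split.
    + rewrite Hg. reflexivity.
    + intros -> ->. apply hg. rewrite Hg. unfold ev, evp. simpl.
      rewrite (hom_one i hi). apply gmul1l.
Qed.


Lemma triv_C (C R : group -> Prop) (hR : root_class R) (hRC : forall G, R G -> C G)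
  (h1s : subgroup_closed C) : exists T, C T /\ forall x y : T, x = y.
Proof.
  destruct hR as [_ [[P0 [HP0 _]] _]].
  assert (hs : is_subgroup (G := P0) (fun x => x = gone)).
  { split; [|split]; [reflexivity| |].
    - intros x y -> ->. apply gmul1l.
    - intros x ->. apply g_inv1. }
  exists (subgrp hs). split. apply h1s; auto.
  intros [x hx] [y hy]. apply subgrp_eq. simpl. congruence.
Qed.

Lemma sep_list (C R : group -> Prop) (hR : root_class R) (hRC : forall G, R G -> C G)
  (h1s : subgroup_closed C) (h1p : product_closed C) (A : group) (hA : residually C A)
  (S : list A) :
  exists Q, C Q /\ exists f : A -> Q, is_hom f /\ surjective f /\
    forall x, In x S -> x <> gone -> f x <> gone.
Proof.
  induction S as [|x S IH].
  - destruct (triv_C C R hR hRC h1s) as [T [hT hTu]].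
    exists T. split; auto. exists (fun _ => gone). split; [|split].
    + intros a b. apply hTu.
    + intro y. exists gone. apply hTu.
    + intros _ [].
  - destruct IH as [Q1 [hQ1 [f1 [hf1 [hs1 hk1]]]]].
    destruct (classic (x = gone)) as [Ex|Ex].
    + exists Q1. split; auto. exists f1. split; [|split]; auto.
      intros y [<-|Hy] Hn; [contradiction|]. auto.
    + destruct (hA x Ex) as [Q2 [hQ2 [f2 [hf2 [hs2 hk2]]]]].
      set (F := fun a => (f1 a, f2 a) : prodgrp Q1 Q2).
      assert (hF : is_hom F).
      { intros a b. unfold F. rewrite hf1, hf2. reflexivity. }
      destruct (corestrict C h1s F hF (h1p _ _ hQ1 hQ2)) as [Q [hQ [g [hg [hgs hgk]]]]].
      exists Q. split; auto. exists g. split; [|split]; auto.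
      intros y Hy Hn E. apply hgk in E. unfold F in E.
      assert (E1 := f_equal fst E). assert (E2 := f_equal snd E). simpl in E1, E2.
      destruct Hy as [<-|Hy]; [contradiction|]. apply (hk1 y Hy Hn E1).
Qed.

Lemma wr_normal (P Q : group) : is_normal (G := wr P Q) (fun a => snd a = gone).
Proof.
  split; [split; [|split]|].
  - reflexivity.
  - intros x y Ex Ey. simpl. rewrite Ex, Ey. apply gmul1l.
  - intros x Ex. simpl. rewrite Ex. apply g_inv1.
  - intros x g Ex. simpl. rewrite Ex, gmul1l. apply gmulVl.
Qed.

Lemma wr_in_C (C R : group -> Prop) (hR : root_class R) (hCiso : iso_closed C)
  (h2 : forall G, ext_by R C G -> C G)
  (h3 : forall G, C G -> exists K, R K /\ same_card G K)
  (P Q0 : group) : R P -> C Q0 -> C (wr P Q0).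
Proof.
  intros hP hQ0. pose proof hR as [hRiso [_ [hRs _]]].
  destruct (h3 Q0 hQ0) as [K [hK [beta [hbi hbs]]]].
  pose (gam := fun k => proj1_sig (constructive_indefinite_description _ (hbs k))).
  assert (Hbg : forall k, beta (gam k) = k).
  { intro k. unfold gam. destruct (constructive_indefinite_description _ _); auto. }
  assert (Hgb : forall x, gam (beta x) = x) by (intro x; apply hbi; apply Hbg).
  apply h2. exists (fun a : wr P Q0 => snd a = gone), (wr_normal P Q0). split.
  - pose proof (wr_normal P K) as hN'.
    assert (hRs' : R (subgrp (proj1 hN'))) by (apply hRs, wr_closed; auto).
    apply (hRiso (subgrp (proj1 hN'))); [|exact hRs'].
    exists (fun a => exist (fun b : wr P Q0 => snd b = gone)
                       ((fun x => fst (proj1_sig a) (beta x)), gone) eq_refl).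
    split; [|split].
    + intros [a ha] [b hb]. apply subgrp_eq. simpl. unfold wr_mul; simpl. f_equal.
      * apply functional_extensionality. intro x. rewrite ha, !gmul1r. reflexivity.
      * symmetry; apply gmul1l.
    + intros [a ha] [b hb] E. apply (f_equal (@proj1_sig _ _)) in E. simpl in E.
      apply subgrp_eq. simpl. destruct a as [a1 a2], b as [b1 b2]. simpl in *. subst.
      f_equal. apply functional_extensionality. intro k.
      rewrite <- (Hbg k). apply (f_equal (fun p => fst p (gam k))) in E. simpl in E. exact E.
    + intros [[b1 b2] hb]. simpl in hb. subst b2.
      exists (exist (fun a : wr P K => snd a = gone) ((fun k => b1 (gam k)), gone) eq_refl).
      apply subgrp_eq. simpl. f_equal. apply functional_extensionality. intro x.
      rewrite Hgb. reflexivity.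
  - exists Q0. split; auto. exists (@snd _ _). split; [|split].
    + intros x y; reflexivity.
    + intros q; exists ((fun _ => gone), q); reflexivity.
    + intros x; split; auto.
Qed.


Definition cr {A Q : group} (H : A -> Prop) (f : A -> Q) (x : Q) : Q :=
  epsilon (inhabits gone) (fun z => exists h, H h /\ z = gmul x (f h)).

Lemma cr_spec {A Q : group} (H : A -> Prop) (hH : is_subgroup H) (f : A -> Q) (hf : is_hom f) x :
  exists h, H h /\ cr H f x = gmul x (f h).
Proof.
  unfold cr. apply (epsilon_spec (inhabits gone) (fun z => exists h, H h /\ z = gmul x (f h))).
  exists x, gone. split. apply sg_one; auto. rewrite (hom_one f hf), gmul1r. reflexivity.
Qed.

Lemma cr_inv {A Q : group} (H : A -> Prop) (hH : is_subgroup H) (f : A -> Q) (hf : is_hom f) x h :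
  H h -> cr H f (gmul x (f h)) = cr H f x.
Proof.
  intro hh. unfold cr. f_equal. apply functional_extensionality. intro z.
  apply propositional_extensionality. split; intros [h' [hh' ->]].
  - exists (gmul h h'). split. apply sg_mul; auto. rewrite hf, gmulA. reflexivity.
  - exists (gmul (ginv h) h'). split. apply sg_mul; auto. apply sg_inv; auto.
    rewrite hf, (hom_inv f hf), <- (gmulA x), g_mulKr. reflexivity.
Qed.

Fixpoint wordOf {A Q : group} (H : A -> Prop) (f : A -> Q) (y : Q) (l : list (bool * A))
  : list (Q * bool) :=
  match l with
  | [] => []
  | (e, r) :: l' => (cr H f y, e) :: wordOf H f (gmul y (f r)) l'
  end.

Lemma wordOf_reduced {A Q : group} (H : A -> Prop) (hH : is_subgroup H) (f : A -> Q) (hf : is_hom f)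
  l : validl H l ->
  (forall e r h, In (e, r) l -> H h -> gmul (ginv h) r <> gone -> f (gmul (ginv h) r) <> gone) ->
  forall y, reduced (wordOf H f y l).
Proof.
  induction l as [|[e r] l IH]; intros hv hsep y; simpl; auto.
  destruct hv as [hr [hh hv]]. split.
  - destruct l as [|[e' r'] l']; auto. simpl. intros [E1 E2].
    destruct (classic (r = gone)) as [Er|Er].
    + rewrite (hh Er) in E2. destruct e; discriminate.
    + destruct (cr_spec H hH f hf y) as [h1 [hh1 E3]].
      destruct (cr_spec H hH f hf (gmul y (f r))) as [h2 [hh2 E4]].
      rewrite E3, E4, <- gmulA in E1. apply g_cancel_l in E1.
      assert (hnr : ~ H r).
      { intro hr'. apply Er. rewrite <- hr. apply rep_R4. exact hr'. }
      set (h := gmul h1 (ginv h2)).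
      assert (hhh : H h) by (apply sg_mul; auto; apply sg_inv; auto).
      apply (hsep e r h (or_introl eq_refl) hhh).
      * intro E. apply hnr. apply g_inv_uniq in E. rewrite g_invK in E. rewrite E. exact hhh.
      * assert (Efr : f h = f r).
        { unfold h. rewrite hf, (hom_inv f hf), E1, g_mulKl'. reflexivity. }
        rewrite hf, (hom_inv f hf), Efr. apply gmulVl.
  - apply IH; auto. intros e' r' h' hin. apply (hsep e' r' h' (or_intror hin)).
Qed.

Lemma phi_evl {A G P Q : group} (H : A -> Prop) (f : A -> Q) (mu : Q -> P) (i : A -> G) (t : G)
  (phi : G -> wr P Q) : is_hom phi ->
  (forall a, phi (i a) = ((fun _ => gone), f a)) ->
  phi t = ((fun x => mu (cr H f x)), gone) ->
  forall l y, fst (phi (evl i t l)) y = evalw mu (wordOf H f y l).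
Proof.
  intros hphi hA hT. induction l as [|[e r] l IH]; intro y; simpl.
  - rewrite (hom_one phi hphi). reflexivity.
  - rewrite !hphi, hA, <- IH. simpl.
    destruct e; simpl; rewrite ?(hom_inv phi hphi), hT; simpl; rewrite ?g_inv1, ?gmul1l, ?gmul1r;
    reflexivity.
Qed.

Theorem corollary4p3 (C R : group -> Prop)
  (hCiso : iso_closed C) (hR : root_class R) (hRC : forall G, R G -> C G)
  (h1s : subgroup_closed C) (h1p : product_closed C)
  (h2 : forall G, ext_by R C G -> C G)
  (h3 : forall G, C G -> exists K, R K /\ same_card G K)
  (A : group) (H : A -> Prop) (hH : finite_subgroup H) (hA : residually C A)
  (G : group) (i : A -> G) (t : G) (hG : is_special_HNN A H G i t) :
  residually C G.
Proof.
  intros g hg.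
  destruct hH as [hHs [Hl HHl]].
  destruct (hnn_nf A H hHs G i t hG g hg) as [a0 [l [hv [Eg Hl0]]]].
  set (S := a0 :: flat_map (fun h => map (fun er => gmul (ginv h) (snd er)) l) Hl).
  destruct (sep_list C R hR hRC h1s h1p A hA S) as [Q0 [hQ0 [f [hf [hfs hfk]]]]].
  assert (hsep : forall e r h, In (e, r) l -> H h -> gmul (ginv h) r <> gone ->
                   f (gmul (ginv h) r) <> gone).
  { intros e r h hin hh hn. apply hfk; auto. unfold S. right.
    apply in_flat_map. exists h. split. apply HHl; auto.
    apply in_map_iff. exists (e, r). split; auto. }
  assert (HP : exists P, R P /\ exists mu : Q0 -> P,
             l <> [] -> evalw mu (wordOf H f gone l) <> gone).
  { destruct l as [|er l'].
    - pose proof hR as [_ [[P0 [HP0 _]] _]]. exists P0. split; auto.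
      exists (fun _ => gone). intro E; contradiction.
    - destruct (free_sep R hR (length (wordOf H f gone (er :: l'))) Q0 (wordOf H f gone (er :: l')))
        as [P [hP [mu hmu]]].
      + auto.
      + destruct er; discriminate.
      + apply wordOf_reduced; auto.
      + exists P. split; auto. exists mu. intros _. exact hmu. }
  destruct HP as [P [hP [mu hmu]]].
  pose proof hG as [hi [hrel [hU _]]].
  destruct (hU (wr P Q0) (fun a => ((fun _ => gone), f a)) ((fun x => mu (cr H f x)), gone))
    as [phi [hphi [hphiA hphiT]]].
  - intros a b. simpl. unfold wr_mul. simpl. rewrite hf. f_equal.
    apply functional_extensionality; intro; symmetry; apply gmul1l.
  - intros h hh. simpl. unfold wr_mul, wr_inv. simpl. f_equal.
    + apply functional_extensionality; intro x. rewrite !g_inv1, !gmul1r, gmul1l.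
      rewrite (cr_inv H hHs f hf x h hh). apply gmulVl.
    + rewrite g_inv1, gmul1l, gmul1r. reflexivity.
  - assert (CW : C (wr P Q0)) by (apply (wr_in_C C R); auto).
    destruct (corestrict C h1s phi hphi CW) as [Q [hQ [psi [hpsi [hpsis hpsik]]]]].
    exists Q. split; auto. exists psi. split; [|split]; auto.
    intro E. apply hpsik in E. rewrite Eg, hphi, hphiA in E.
    destruct l as [|er l'].
    + simpl in E. rewrite (hom_one phi hphi) in E.
      apply (f_equal snd) in E. simpl in E. rewrite gmul1r in E.
      apply (hfk a0); [left; auto| apply Hl0; auto | exact E].
    + apply (f_equal (fun p => fst p (ginv (f a0)))) in E. rewrite wr_fst_mul in E.
      cbn [fst snd] in E. rewrite gmul1l, gmulVl in E.
      rewrite (phi_evl H f mu i t phi hphi hphiA hphiT) in E.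
      apply hmu; [discriminate|]. exact E.
Qed.
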